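(* Let $(f,g)$ be a discrete Ribaucour pair of $(\mathfrak{m}^1,\mathfrak{m}^2)$-type. Then $f$ and $g$ are both spherical curves, i.e. for each of them there is a sphere (possibly a plane) containing all of its points.
   Context: Light cone model: $\mathbb{R}^{4,2}$ with a form $\langle\cdot,\cdot\rangle$ of signature $(4,2)$, light cone $\mathcal{L}$, $\mathbb{P}(\mathcal{L})$; fixed $\mathfrak{p}$ with $\langle\mathfrak{p},\mathfrak{p}\rangle=-1$; $v$ with $\langle\mathfrak{v},\mathfrak{p}\rangle=0$ are points of $\mathbb{R}^3\cup\{\infty\}$, others oriented spheres (planes included); incidence = orthogonality. Inversion in $\mathfrak{a}$: $\sigma_a(x)=x-\frac{2\langle x,\mathfrak{a}\rangle}{\langle\mathfrak{a},\mathfrak{a}\rangle}\mathfrak{a}$; M-inversion if $\mathfrak{a}\perp\mathfrak{p}$; $\sigma_a$ fixes exactly the vectors orthogonal to $\mathfrak{a}$. Discrete curves are maps from consecutive integers to points. A Ribaucour pair $(f,g)$: $f_i,f_j,g_j,g_i$ concircular for each edge $(ij)$; with representatives satisfying $\mathfrak{f}_i-\mathfrak{f}_j+\mathfrak{g}_j-\mathfrak{g}_i=0$ its R-evolution map consists of the M-inversions in $\mathfrak{r}_{ij}=\mathfrak{f}_i-\mathfrak{f}_j$. The pair is of $(\mathfrak{m}^1,\mathfrak{m}^2)$-type if $\mathrm{span}\{\mathfrak{m}^1,\mathfrak{m}^2,\mathfrak{p}\}$ is a 3-dimensional subspace consisting of fixed points of all inversions of the R-evolution map. *)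

(* Defs.v *)
From HB Require Import structures.
From mathcomp Require Import all_boot all_order all_algebra.
Set Implicit Arguments. Unset Strict Implicit. Unset Printing Implicit Defensive.
Import Order.TTheory GRing.Theory Num.Theory.
Local Open Scope ring_scope.

Section LightCone.
Variable R : rcfType.
Implicit Types (x y a v p : 'rV[R]_6).

Definition lor x y : R :=
  \sum_(i < 6) (if (i < 4)%N then 1 else -1) * x 0 i * y 0 i.

Definition inversion a x : 'rV[R]_6 := x - ((2 * lor x a) / lor a a) *: a.

(* a defines an M-inversion (w.r.t. the fixed timelike p): a is not null
   (so that sigma_a is an inversion) and a is orthogonal to p. *)
Definition is_Minversion p a : Prop := lor a a != 0 /\ lor a p = 0.

(* A point of P(L): a (nonzero) light-cone representative orthogonal to p. *)
Definition is_point p x : Prop := x != 0 /\ lor x x = 0 /\ lor x p = 0.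

(* An oriented sphere (planes included): a nonzero light-cone vector
   not orthogonal to p. *)
Definition is_sphere p x : Prop := x != 0 /\ lor x x = 0 /\ lor x p != 0.

Definition consecutive (D : {pred int}) : Prop :=
  forall i j k : int, i \in D -> k \in D -> i <= j <= k -> j \in D.

Definition discrete_curve p (D : {pred int}) (f : int -> 'rV[R]_6) : Prop :=
  consecutive D /\ forall i, i \in D -> is_point p (f i).

Definition edge (D : {pred int}) (i : int) : bool := (i \in D) && (i + 1 \in D).

(* Four points (given by representatives) are concircular iff their
   representatives are linearly dependent. *)
Definition concircular (a b c d : 'rV[R]_6) : Prop :=
  (\dim <<[:: a; b; c; d]>>%VS <= 3)%N.

Definition ribaucour_pair p D (f g : int -> 'rV[R]_6) : Prop :=
  [/\ discrete_curve p D f, discrete_curve p D g &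
      forall i, edge D i -> concircular (f i) (f (i + 1)) (g (i + 1)) (g i)].

Definition ribaucour_reps D (f g : int -> 'rV[R]_6) (lf lg : int -> R) : Prop :=
  (forall i, i \in D -> lf i != 0 /\ lg i != 0) /\
  forall i, edge D i ->
    lf i *: f i - lf (i + 1) *: f (i + 1) + lg (i + 1) *: g (i + 1)
      - lg i *: g i = 0.

Definition r_edge (f : int -> 'rV[R]_6) (lf : int -> R) (i : int) : 'rV[R]_6 :=
  lf i *: f i - lf (i + 1) *: f (i + 1).

(* The pair (f,g) is of (m1,m2)-type: for suitable representatives, the
   R-evolution map consists of M-inversions in r_{ij}, and
   span{m1,m2,p} is 3-dimensional and consists of fixed points of all
   these inversions. *)
Definition of_type p D (f g : int -> 'rV[R]_6) (m1 m2 : 'rV[R]_6) : Prop :=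
  exists lf lg : int -> R,
  [/\ ribaucour_reps D f g lf lg,
      forall i, edge D i -> is_Minversion p (r_edge f lf i),
      \dim <<[:: m1; m2; p]>>%VS = 3%N &
      forall i, edge D i -> forall v, v \in <<[:: m1; m2; p]>>%VS ->
        inversion (r_edge f lf i) v = v].

Definition spherical p (D : {pred int}) (f : int -> 'rV[R]_6) : Prop :=
  exists s, is_sphere p s /\ forall i, i \in D -> lor (f i) s = 0.

End LightCone.

(* Main.v *)
Require Import Defs.
From HB Require Import structures.
From mathcomp Require Import all_boot all_order all_algebra.
From mathcomp Require Import ring lra zify.
From Stdlib Require Import Classical_Prop.
Set Implicit Arguments. Unset Strict Implicit. Unset Printing Implicit Defensive.
Import Order.TTheory GRing.Theory Num.Theory.
Local Open Scope ring_scope.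

Lemma ker_exists (F : fieldType) n k (A : 'M[F]_(n,k)) : (k < n)%N ->
  exists x : 'rV_n, x != 0 /\ x *m A = 0.
Proof.
move=> kn.
have : kermx A != 0.
  rewrite -mxrank_eq0 mxrank_ker.
  have := rank_leq_col A. rewrite subn_eq0 -ltnNge => H.
  exact: leq_ltn_trans H kn.
move=> Hk.
have [i Hi] : exists i, row i (kermx A) != 0.
  apply/existsP; apply: contraR Hk; rewrite negb_exists => /forallP H.
  apply/eqP/row_matrixP => i; rewrite row0; exact/eqP/negbNE/H.
exists (row i (kermx A)); split=> //.
by rewrite -row_mul mulmx_ker row0.
Qed.

Lemma kernel3 (R : fieldType) (u1 u2 u3 v1 v2 v3 : R) : exists a b c,
  ~~ [&& a == 0, b == 0 & c == 0] /\ a*u1+b*u2+c*u3 = 0 /\ a*v1+b*v2+c*v3 = 0.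
Proof.
pose A : 'M[R]_(3,2) := \matrix_(i<3,j<2)
   nth 0 (if j == 0 :> nat then [:: u1; u2; u3] else [:: v1; v2; v3]) i.
have [w [w0 wA]] := @ker_exists _ _ _ A isT.
have e0 : (inord 0 : 'I_3) = ord0 by apply: val_inj; rewrite /= inordK.
have e1 : (inord 1 : 'I_3) = lift ord0 ord0 by apply: val_inj; rewrite /= inordK.
have e2 : (inord 2 : 'I_3) = lift ord0 (lift ord0 ord0) by apply: val_inj; rewrite /= inordK.
exists (w 0 (inord 0)), (w 0 (inord 1)), (w 0 (inord 2)); rewrite e0 e1 e2; split; [|split].
- apply: contra w0 => /and3P[/eqP a0 /eqP b0 /eqP c0].
  apply/eqP/rowP => j; rewrite mxE.
  case: j => [[|[|[|j]]] Hj] //=.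
  + by rewrite -a0; congr (w 0 _); apply: val_inj.
  + by rewrite -b0; congr (w 0 _); apply: val_inj.
  + by rewrite -c0; congr (w 0 _); apply: val_inj.
- have := congr1 (fun M : 'M[R]_(1,2) => M 0 (inord 0)) wA; rewrite !mxE !big_ord_recl big_ord0 !mxE /=.
  by rewrite !inordK //= => <-; ring.
- have := congr1 (fun M : 'M[R]_(1,2) => M 0 (inord 1)) wA; rewrite !mxE !big_ord_recl big_ord0 !mxE /=.
  by rewrite !inordK //= => <-; ring.
Qed.
Lemma const_along (R : rcfType) (D : {pred int}) (phi : int -> R) : consecutive D ->
  (forall i, edge D i -> phi i = phi (i+1)) ->
  forall i j, i \in D -> j \in D -> phi i = phi j.
Proof.
move=> cD E.
have up : forall (n : nat) i, i \in D -> i + n%:Z \in D -> phi i = phi (i + n%:Z).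
  elim=> [|n IH] i iD inD; first by rewrite addr0.
  have mid : i + n%:Z \in D.
    by apply: (cD i _ (i + n.+1%:Z)) => //; apply/andP; split; lia.
  rewrite (IH i iD mid).
  have e1 : i + n.+1%:Z = (i + n%:Z) + 1 by lia.
  by rewrite e1; apply: E; rewrite /edge mid -e1.
have gen : forall i j, i <= j -> i \in D -> j \in D -> phi i = phi j.
  move=> i j ij iD jD.
  have e1 : j = i + (`|j - i|%N)%:Z by lia.
  by rewrite e1; apply: up => //; rewrite -e1.
move=> i j iD jD; case: (lerP i j) => ij; first exact: gen.
by apply/esym/gen => //; apply: ltW.
Qed.

Section S.
Variable R : rcfType.
Implicit Types (x y z u v p q e h : 'rV[R]_6).

Definition co x (k : nat) : R := x 0 (inord k).

Lemma coE x (i : 'I_6) : x 0 i = co x i.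
Proof. by rewrite /co; congr (x 0 _); apply: val_inj; rewrite /= inordK. Qed.

Lemma lorE x y : lor x y = co x 0 * co y 0 + co x 1 * co y 1 + co x 2 * co y 2
   + co x 3 * co y 3 - co x 4 * co y 4 - co x 5 * co y 5.
Proof.
rewrite /lor !big_ord_recl big_ord0 /= !coE /=.
ring.
Qed.

Lemma lemB p n x : lor p p < 0 -> lor n p = 0 -> lor x p = 0 -> lor n x = 0 ->
  lor n n <= 0 -> lor x x <= 0 ->
  exists b c, ~~ ((b == 0) && (c == 0)) /\ b *: n + c *: x = 0.
Proof.
have [a [b [c [nz [e4 e5]]]]] :=
  @kernel3 _ (co p 4) (co n 4) (co x 4) (co p 5) (co n 5) (co x 5).
rewrite !lorE => Hpp Hnp Hxp Hnx Hnn Hxx.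
set z0 := a * co p 0 + b * co n 0 + c * co x 0.
set z1 := a * co p 1 + b * co n 1 + c * co x 1.
set z2 := a * co p 2 + b * co n 2 + c * co x 2.
set z3 := a * co p 3 + b * co n 3 + c * co x 3.
set Lpp := (X in X < 0) in Hpp.
set Lnn := (X in X <= 0) in Hnn.
set Lxx := (X in X <= 0) in Hxx.
have id : z0^+2 + z1^+2 + z2^+2 + z3^+2 = a^+2 * Lpp + b^+2 * Lnn + c^+2 * Lxx.
  have id0 : z0^+2 + z1^+2 + z2^+2 + z3^+2
     - (a * co p 4 + b * co n 4 + c * co x 4)^+2 - (a * co p 5 + b * co n 5 + c * co x 5)^+2
     = a^+2 * Lpp + b^+2 * Lnn + c^+2 * Lxx
       + 2 * a * b * (co n 0 * co p 0 + co n 1 * co p 1 + co n 2 * co p 2 + co n 3 * co p 3 - co n 4 * co p 4 - co n 5 * co p 5)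
       + 2 * a * c * (co x 0 * co p 0 + co x 1 * co p 1 + co x 2 * co p 2 + co x 3 * co p 3 - co x 4 * co p 4 - co x 5 * co p 5)
       + 2 * b * c * (co n 0 * co x 0 + co n 1 * co x 1 + co n 2 * co x 2 + co n 3 * co x 3 - co n 4 * co x 4 - co n 5 * co x 5).
    rewrite /z0 /z1 /z2 /z3 /Lpp /Lnn /Lxx; ring.
  by move: id0; rewrite e4 e5 Hnp Hxp Hnx; rewrite expr0n /= !subr0 !mulr0 !addr0.

have hb : b^+2 * Lnn <= 0 := mulr_ge0_le0 (sqr_ge0 b) Hnn.
have hc : c^+2 * Lxx <= 0 := mulr_ge0_le0 (sqr_ge0 c) Hxx.
have s0 : 0 <= z0^+2 + z1^+2 + z2^+2 + z3^+2 by rewrite !addr_ge0 // sqr_ge0.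
have ha1 : 0 <= a^+2 * Lpp by lra.
have ha2 : a^+2 * Lpp <= 0 by rewrite mulr_ge0_le0 ?sqr_ge0 // ltW.
have a0 : a = 0.
  have : a^+2 * Lpp = 0 by apply/le_anti; rewrite ha1 ha2.
  move/eqP; rewrite mulf_eq0 (negbTE (ltr0_neq0 Hpp)) orbF.
  by rewrite sqrf_eq0 => /eqP.
have q0 := sqr_ge0 z0; have q1 := sqr_ge0 z1; have q2 := sqr_ge0 z2; have q3 := sqr_ge0 z3.
have sq0 : forall t : R, t^+2 <= 0 -> t = 0.
  by move=> t ht; apply/eqP; rewrite -sqrf_eq0 eq_le ht sqr_ge0.
have h0 : z0 = 0 by apply: sq0; lra.
have h1 : z1 = 0 by apply: sq0; lra.
have h2 : z2 = 0 by apply: sq0; lra.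
have h3 : z3 = 0 by apply: sq0; lra.
move: h0 h1 h2 h3 e4 e5 nz; rewrite /z0 /z1 /z2 /z3 a0 !mul0r !add0r.
move=> h0 h1 h2 h3 h4 h5 nz.
exists b, c; split; first by rewrite eqxx in nz.
apply/rowP => j; rewrite !mxE.
case: j => [[|[|[|[|[|[|j]]]]]] Hj] //=; rewrite ?coE //.
Qed.

Lemma lorC x y : lor x y = lor y x.
Proof. rewrite !lorE; ring. Qed.
Lemma lorDZ a b x y z : lor (a *: x + b *: y) z = a * lor x z + b * lor y z.
Proof. rewrite !lorE /co !mxE; ring. Qed.
Lemma lorB x y z : lor (x - y) z = lor x z - lor y z.
Proof. rewrite !lorE /co !mxE; ring. Qed.
Lemma lorD x y z : lor (x + y) z = lor x z + lor y z.
Proof. rewrite !lorE /co !mxE; ring. Qed.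
Lemma lorZ a x z : lor (a *: x) z = a * lor x z.
Proof. rewrite !lorE /co !mxE; ring. Qed.
Lemma lor0 z : lor 0 z = 0.
Proof. rewrite !lorE /co !mxE; ring. Qed.

Lemma sphere_of p e : lor p p = -1 -> lor e p = 0 -> 0 < lor e e ->
  exists s, is_sphere p s /\ forall h, lor h p = 0 -> lor h e = 0 -> lor h s = 0.
Proof.
move=> Hp Hep He.
set t := Num.sqrt (lor e e).
have t2 : t ^+ 2 = lor e e by rewrite sqr_sqrtr // ltW.
have t0 : 0 < t by rewrite sqrtr_gt0.
exists (e + t *: p); split; last first.
  by move=> h hp he; rewrite lorC lorD lorZ !(lorC _ h) hp he mulr0 addr0.
have sp : lor (e + t *: p) p != 0.
  by rewrite lorD lorZ Hep Hp add0r mulrN1 oppr_eq0 gt_eqF.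
split; [|split] => //.
- by apply: contraNneq sp => ->; rewrite lor0.
- rewrite !lorD !lorZ !(lorC _ (e + t *: p)) !lorD !lorZ (lorC p e) Hep Hp -t2; ring.
Qed.

Definition sg (i : 'I_6) : R := if (i < 4)%N then 1 else -1.

Lemma lorJ q : lor q (\row_i (sg i * q 0 i)) = \sum_i q 0 i ^+ 2.
Proof.
rewrite /lor; apply: eq_bigr => i _; rewrite mxE /sg.
by case: ifP => _; rewrite expr2; ring.
Qed.

Lemma sumsq_gt0 q : q != 0 -> 0 < \sum_i q 0 i ^+ 2.
Proof.
move=> q0; rewrite lt_def sumr_ge0 ?andbT; last by move=> i _; exact: sqr_ge0.
apply: contra q0 => /eqP H; apply/eqP/rowP => i; rewrite mxE.
have := @psumr_eq0P _ _ (fun _ => true) (fun k => q 0 k ^+ 2) (fun k _ => sqr_ge0 _) H i isT.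
by move/eqP; rewrite sqrf_eq0 => /eqP.
Qed.

Lemma e_exists p q : lor p p = -1 -> q != 0 -> lor q p = 0 -> lor q q <= 0 ->
  exists e, [/\ lor e p = 0, 0 < lor e e, lor e q = 0 &
    forall h, lor h h = 0 -> lor h p = 0 -> lor h q = 0 -> lor h e = 0].
Proof.
move=> Hp q0 Hqp Hqq.
have Hp0 : lor p p < 0 by rewrite Hp ltrN10.
set Jq := \row_i (sg i * q 0 i) : 'rV[R]_6.
have S0 := sumsq_gt0 q0. rewrite -lorJ -/Jq in S0.
pose A : 'M[R]_(6,3) := \matrix_(i, j)
   (sg i * (nth 0 [:: p; q; Jq] j) 0 i).
have [e [e0 eA]] := @ker_exists _ _ _ A isT.
have key : forall j : 'I_3, lor e (nth 0 [:: p; q; Jq] j) = 0.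
  move=> j; have := congr1 (fun M : 'M[R]_(1,3) => M 0 j) eA.
  rewrite !mxE => H; apply: etrans H; rewrite /lor; apply: eq_bigr => i _; rewrite mxE /sg; ring.
have ep : lor e p = 0 by have := key (inord 0); rewrite inordK.
have eq : lor e q = 0 by have := key (inord 1); rewrite inordK.
have eJ : lor e Jq = 0 by have := key (inord 2); rewrite inordK.
have ee : 0 < lor e e.
  rewrite ltNge; apply/negP => Hee.
  have [b [c [bc E]]] := lemB Hp0 Hqp ep (etrans (lorC q e) eq) Hqq Hee.
  have := congr1 (fun v => lor v Jq) E; rewrite lorDZ eJ lor0 mulr0 addr0 => /eqP.
  rewrite mulf_eq0 (gt_eqF S0) orbF => /eqP b0.
  move: bc E; rewrite b0 eqxx /= scale0r add0r => c0 /eqP.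
  by rewrite scaler_eq0 (negbTE c0) (negbTE e0).
exists e; split => // h hh hp hq.
have hh0 : lor h h <= 0 by rewrite hh.
have [b [c [bc E]]] := lemB Hp0 Hqp hp (etrans (lorC q h) hq) Hqq hh0.
have := congr1 (fun v => lor v e) E; rewrite lorDZ (lorC q e) eq lor0 mulr0 add0r => /eqP.
rewrite mulf_eq0 => /orP[/eqP c0|/eqP //].
move: bc E; rewrite c0 eqxx andbT scale0r addr0 => b0 /eqP.
by rewrite scaler_eq0 (negbTE b0) (negbTE q0).
Qed.

Lemma curve_sph p (D : {pred int}) (H : int -> 'rV[R]_6) m1 m2 :
  lor p p = -1 -> consecutive D ->
  (forall i, i \in D -> lor (H i) (H i) = 0 /\ lor (H i) p = 0) ->
  (forall a b c, a *: m1 + b *: m2 + c *: p = 0 -> a = 0 /\ b = 0) ->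
  (forall i, edge D i -> forall v, (v = m1 \/ v = m2 \/ v = p) -> lor (H i - H (i+1)) v = 0) ->
  exists s, is_sphere p s /\ forall i, i \in D -> lor (H i) s = 0.
Proof.
move=> Hp cD Hpt Hfree Hedge.
have cst : forall v, (v = m1 \/ v = m2 \/ v = p) -> forall i j, i \in D -> j \in D ->
    lor (H i) v = lor (H j) v.
  move=> v hv; apply: const_along => // i ei.
  by apply/eqP; rewrite -subr_eq0 -lorB; apply/eqP/Hedge.
have mkq : forall a b, ~~ ((a == 0) && (b == 0)) ->
    (forall i, i \in D -> a * lor (H i) m1 + b * lor (H i) m2 = 0) ->
    exists q, [/\ q != 0, lor q p = 0 & forall i, i \in D -> lor (H i) q = 0].
  move=> a b ab Hab.
  set t := lor (a *: m1 + b *: m2) p.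
  exists (a *: m1 + b *: m2 + t *: p); split.
  - apply: contra ab => /eqP /Hfree [-> ->]; by rewrite eqxx.
  - by rewrite lorD lorZ Hp /t; ring.
  - move=> i iD; rewrite lorC lorD lorDZ lorZ (lorC p) (Hpt i iD).2.
    by rewrite (lorC m1) (lorC m2) Hab // mulr0 addr0.
have [q [q0 qp qH]] : exists q, [/\ q != 0, lor q p = 0 & forall i, i \in D -> lor (H i) q = 0].
  case: (classic (exists i0, i0 \in D)) => [[i0 i0D]|nD]; last first.
    apply: (mkq 1 0); first by rewrite oner_eq0.
    by move=> i iD; exfalso; apply: nD; exists i.
  have c1 := cst m1 (or_introl erefl) _ i0 _ i0D.
  have c2 := cst m2 (or_intror (or_introl erefl)) _ i0 _ i0D.
  have [e1|ne1] := eqVneq (lor (H i0) m1) 0.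
    apply: (mkq 1 0); first by rewrite oner_eq0.
    by move=> i iD; rewrite (c1 i iD) e1; ring.
  apply: (mkq (lor (H i0) m2) (- lor (H i0) m1)).
    by rewrite oppr_eq0 (negbTE ne1) andbF.
  by move=> i iD; rewrite (c1 i iD) (c2 i iD); ring.
have [e [ep ee eH]] : exists e, [/\ lor e p = 0, 0 < lor e e &
    forall i, i \in D -> lor (H i) e = 0].
  case: (lerP (lor q q) 0) => Hqq; last by exists q.
  have [e [ep ee eq eh]] := e_exists Hp q0 qp Hqq.
  exists e; split => // i iD.
  by apply: eh; [exact: (Hpt i iD).1 | exact: (Hpt i iD).2 | exact: qH].
have [s [ss sH]] := sphere_of Hp ep ee.
exists s; split => // i iD; apply: sH; [exact: (Hpt i iD).2 | exact: eH].
Qed.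

Lemma fix_orth r v : lor r r != 0 -> inversion r v = v -> lor v r = 0.
Proof.
rewrite /inversion => rr /eqP; rewrite subr_eq addrC -subr_eq subrr eq_sym scaler_eq0.
case/orP => [|/eqP r0]; last by move: rr; rewrite r0 lor0 eqxx.
rewrite !mulf_eq0 invr_eq0 (negbTE rr) orbF => /orP[/eqP two|/eqP //].
by move: two; lra.
Qed.

Lemma free3 m1 m2 p : \dim <<[:: m1; m2; p]>>%VS = 3%N ->
  forall a b c, a *: m1 + b *: m2 + c *: p = 0 -> a = 0 /\ b = 0.
Proof.
move=> Hd a b c E.
have fr : free [:: m1; m2; p] by rewrite /free Hd.
move: fr; rewrite free_cons => /andP[n1]; rewrite free_cons => /andP[n2 _].
have a0 : a = 0.
  apply/eqP; apply: contraNT n1 => a0.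
  move: E; rewrite -addrA => /eqP; rewrite addr_eq0 => /eqP E.
  have -> : m1 = a^-1 *: (a *: m1) by rewrite scalerA mulVf // scale1r.
  rewrite E rpredZ // rpredN rpredD // rpredZ // memv_span // !inE eqxx ?orbT //.
split => //.
move: E; rewrite a0 scale0r add0r => /eqP; rewrite addr_eq0 => /eqP E.
apply/eqP; apply: contraNT n2 => b0.
have -> : m2 = b^-1 *: (b *: m2) by rewrite scalerA mulVf // scale1r.
by rewrite E rpredZ // rpredN rpredZ // memv_span // !inE eqxx ?orbT.
Qed.
End S.

Theorem corollary2p5 (R : rcfType) (p : 'rV[R]_6) (D : {pred int})
    (f g : int -> 'rV[R]_6) (m1 m2 : 'rV[R]_6) :
  lor p p = -1 ->
  ribaucour_pair p D f g ->
  of_type p D f g m1 m2 ->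
  spherical p D f /\ spherical p D g.
Proof.
move=> Hp [[cD fpt] [_ gpt] _] [lf [lg [[lnz reps] Hminv Hdim Hfix]]].
have Hfree := free3 Hdim.
have orth : forall i, edge D i -> forall v, (v = m1 \/ v = m2 \/ v = p) ->
    lor (r_edge f lf i) v = 0.
  move=> i ei v hv; rewrite lorC; apply: fix_orth; first exact: (Hminv i ei).1.
  apply: (Hfix i ei); case: hv => [->|[->|->]];
    apply: memv_span; rewrite !inE eqxx ?orbT //.
have conv : forall (l : int -> R) (h : int -> 'rV[R]_6),
    (forall i, i \in D -> l i != 0 /\ is_point p (h i)) ->
    (forall i, edge D i -> forall v, (v = m1 \/ v = m2 \/ v = p) ->
       lor (l i *: h i - l (i+1) *: h (i+1)) v = 0) ->
    spherical p D h.
  move=> l h Hlh Hed.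
  have pts : forall i, i \in D ->
      lor (l i *: h i) (l i *: h i) = 0 /\ lor (l i *: h i) p = 0.
    move=> i iD; have [_ [_ [h1 h2]]] := Hlh i iD.
    by rewrite !lorZ lorC lorZ h1 h2 !mulr0.
  have [s [ss sH]] := curve_sph Hp cD pts Hfree Hed.
  exists s; split => // i iD.
  have := sH i iD; rewrite lorZ => /eqP; rewrite mulf_eq0 (negbTE (Hlh i iD).1) /=.
  by move/eqP.
split.
- apply: (conv lf) => // i iD; split; [exact: (lnz i iD).1 | exact: fpt].
- apply: (conv lg) => [i iD|i ei v hv]; first by split; [exact: (lnz i iD).2 | exact: gpt].
  have -> : lg i *: g i - lg (i + 1) *: g (i + 1) = r_edge f lf i.
    have := reps i ei; rewrite /r_edge => E.
    apply/eqP; rewrite -subr_eq0 -oppr_eq0; apply/eqP; rewrite -E.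
    by apply/rowP => k; rewrite !mxE; ring.
  exact: orth.
Qed.
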